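(* Let $N\ge 1$, $a\in\mathbb{R}^N$ with all $a_i\neq 0$, $\underline x<\overline x$, $\underline y<\overline y$ in $\mathbb{R}^N$, and $\mathcal{S}_a=\{(x,y)\in\mathbb{R}^N\times\mathbb{R}^N: \sum_{i=1}^N a_ix_iy_i=0,\ \underline x\le x\le\overline x,\ \underline y\le y\le\overline y\}$. Then every extreme point $(x,y)$ of $\mathcal{S}_a$ belongs to one of the sets $D_0,D_1,\dots,D_N$, where $D_0=\{(x,y)\in\mathcal{S}_a:\ x_i\in\{\underline x_i,\overline x_i\},\ y_i\in\{\underline y_i,\overline y_i\}\ \forall i\}$ and, for $k=1,\dots,N$, $D_k=\{(x,y)\in\mathcal{S}_a:\ x_i\in\{\underline x_i,\overline x_i\},\ y_i\in\{\underline y_i,\overline y_i\}\ \forall i\neq k,\ x_ky_k=-\tfrac{1}{a_k}\sum_{i\neq k}a_ix_iy_i\}$. Equivalently, there is at most one index $k$ such that $(x_k,y_k)$ is not a vertex of $[\underline x_k,\overline x_k]\times[\underline y_k,\overline y_k]$. *)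

(* Defs.v *)
From HB Require Import structures.
From mathcomp Require Import all_boot all_order all_algebra.
Set Implicit Arguments. Unset Strict Implicit. Unset Printing Implicit Defensive.
Import Order.TTheory GRing.Theory Num.Theory.
Local Open Scope ring_scope.

Definition pt (R : realFieldType) (N : nat) := (('I_N -> R) * ('I_N -> R))%type.

Definition pt_eq (R : realFieldType) (N : nat) (p q : pt R N) : Prop :=
  forall i, p.1 i = q.1 i /\ p.2 i = q.2 i.

Definition comb (R : realFieldType) (N : nat) (t : R) (u v : pt R N) : pt R N :=
  (fun i => t * u.1 i + (1 - t) * v.1 i, fun i => t * u.2 i + (1 - t) * v.2 i).

Definition extreme_point (R : realFieldType) (N : nat) (S : pt R N -> Prop)
  (p : pt R N) : Prop :=
  S p /\ forall (u v : pt R N) (t : R), S u -> S v -> 0 < t < 1 ->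
     pt_eq p (comb t u v) -> pt_eq u v.

Definition Sa (R : realFieldType) (N : nat) (a xl xu yl yu : 'I_N -> R)
  (p : pt R N) : Prop :=
  \sum_(i < N) a i * p.1 i * p.2 i = 0 /\
  forall i, (xl i <= p.1 i <= xu i) /\ (yl i <= p.2 i <= yu i).

Definition at_vertex (R : realFieldType) (N : nat) (xl xu yl yu : 'I_N -> R)
  (p : pt R N) (i : 'I_N) : Prop :=
  (p.1 i = xl i \/ p.1 i = xu i) /\ (p.2 i = yl i \/ p.2 i = yu i).

Definition D0 (R : realFieldType) (N : nat) (a xl xu yl yu : 'I_N -> R)
  (p : pt R N) : Prop :=
  Sa a xl xu yl yu p /\ forall i, at_vertex xl xu yl yu p i.

Definition Dk (R : realFieldType) (N : nat) (a xl xu yl yu : 'I_N -> R)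
  (k : 'I_N) (p : pt R N) : Prop :=
  Sa a xl xu yl yu p /\ (forall i, i != k -> at_vertex xl xu yl yu p i) /\
  p.1 k * p.2 k = - (a k)^-1 * \sum_(i < N | i != k) a i * p.1 i * p.2 i.

(* Main.v *)
Require Import Defs.
From HB Require Import structures.
From mathcomp Require Import all_boot all_order all_algebra.
From mathcomp Require Import ring lra.
Import Order.TTheory GRing.Theory Num.Theory.
Local Open Scope ring_scope.

Section Aux.
Set Implicit Arguments.
Variables (R : realFieldType) (N : nat) (a xl xu yl yu : 'I_N -> R).

Lemma key (p e : pt R N) :
  extreme_point (Sa a xl xu yl yu) p ->
  (forall i, e.1 i * e.2 i = 0) ->
  \sum_(i < N) a i * (e.1 i * p.2 i + p.1 i * e.2 i) = 0 ->
  (forall i, (xl i <= p.1 i + e.1 i <= xu i) /\ (xl i <= p.1 i - e.1 i <= xu i)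
     /\ (yl i <= p.2 i + e.2 i <= yu i) /\ (yl i <= p.2 i - e.2 i <= yu i)) ->
  forall i, e.1 i = 0 /\ e.2 i = 0.
Proof.
case=> [[hS hB] hE] he0 hL hbox.
pose u : pt R N := (fun i => p.1 i + e.1 i, fun i => p.2 i + e.2 i).
pose v : pt R N := (fun i => p.1 i - e.1 i, fun i => p.2 i - e.2 i).
have Su : Sa a xl xu yl yu u.
  split; last by move=> i; have [h1 [_ [h3 _]]] := hbox i; split.
  rewrite /=.
  transitivity (\sum_(i < N) a i * p.1 i * p.2 i +
                \sum_(i < N) a i * (e.1 i * p.2 i + p.1 i * e.2 i)); last first.
    by rewrite hS hL addr0.
  rewrite -big_split; apply: eq_bigr => i _ /=.
  apply/eqP; rewrite -subr_eq0.
  have -> : a i * (p.1 i + e.1 i) * (p.2 i + e.2 i) -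
    (a i * p.1 i * p.2 i + a i * (e.1 i * p.2 i + p.1 i * e.2 i)) =
    a i * (e.1 i * e.2 i) by ring.
  by rewrite he0 mulr0.
have Sv : Sa a xl xu yl yu v.
  split; last by move=> i; have [_ [h2 [_ h4]]] := hbox i; split.
  rewrite /=.
  transitivity (\sum_(i < N) a i * p.1 i * p.2 i +
                \sum_(i < N) - (a i * (e.1 i * p.2 i + p.1 i * e.2 i))); last first.
    by rewrite sumrN hS hL oppr0 addr0.
  rewrite -big_split; apply: eq_bigr => i _ /=.
  apply/eqP; rewrite -subr_eq0.
  have -> : a i * (p.1 i - e.1 i) * (p.2 i - e.2 i) -
    (a i * p.1 i * p.2 i + - (a i * (e.1 i * p.2 i + p.1 i * e.2 i))) =
    a i * (e.1 i * e.2 i) by ring.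
  by rewrite he0 mulr0.
have ht : 0 < (2^-1 : R) < 1 by apply/andP; split; lra.
have hpe : pt_eq p (comb 2^-1 u v).
  move=> i; rewrite /comb /=; split; field; rewrite ?pnatr_eq0 //=.
move=> i; have [h1 h2] := hE u v 2^-1 Su Sv ht hpe i.
move: h1 h2; rewrite /= => h1 h2; split; lra.
Qed.


Definition coefb (p : pt R N) (i : 'I_N) (b : bool) : R :=
  if b then a i * p.2 i else a i * p.1 i.
Definition marg (p : pt R N) (i : 'I_N) (b : bool) : R :=
  if b then Num.min (p.1 i - xl i) (xu i - p.1 i)
  else Num.min (p.2 i - yl i) (yu i - p.2 i).
Definition dirv (j k : 'I_N) (bj bk : bool) (ej ek : R) : pt R N :=
  (fun l => if l == j then (if bj then ej else 0)
            else if l == k then (if bk then ek else 0) else 0,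
   fun l => if l == j then (if bj then 0 else ej)
            else if l == k then (if bk then 0 else ek) else 0).

Lemma boxd (lo x hi d : R) : lo <= x <= hi -> `|d| <= Num.min (x - lo) (hi - x) ->
  (lo <= x + d <= hi) /\ (lo <= x - d <= hi).
Proof.
move=> /andP[h1 h2]; rewrite le_min => /andP[]; rewrite !ler_norml.
move=> /andP[h3 h4] /andP[h5 h6]; split; apply/andP; split; lra.
Qed.

Lemma no_two (p : pt R N) : extreme_point (Sa a xl xu yl yu) p ->
  forall (j k : 'I_N), j != k -> forall bj bk ej ek,
  `|ej| <= marg p j bj -> `|ek| <= marg p k bk ->
  coefb p j bj * ej + coefb p k bk * ek = 0 -> ej = 0 /\ ek = 0.
Proof.
move=> hext j k hjk bj bk ej ek hj hk hc.
have hkj : k != j by rewrite eq_sym.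
have [[_ hB] _] := hext.
have H1 : forall i, (dirv j k bj bk ej ek).1 i * (dirv j k bj bk ej ek).2 i = 0.
  move=> l; rewrite /dirv /=; case: (l == j); first by case: (bj); rewrite ?mulr0 ?mul0r.
  case: (l == k); last by rewrite mulr0.
  by case: (bk); rewrite ?mulr0 ?mul0r.
have H2 : \sum_(i < N) a i * ((dirv j k bj bk ej ek).1 i * p.2 i +
      p.1 i * (dirv j k bj bk ej ek).2 i) = 0.
  rewrite (bigD1 j) // (bigD1 k) ?hkj //= big1 ?addr0; last first.
    move=> i /andP[hij hik]; rewrite /dirv /= (negbTE hij) (negbTE hik).
    by rewrite mul0r mulr0 addr0 mulr0.
  rewrite /dirv /= eqxx (negbTE hkj) eqxx.
  apply: etrans hc; rewrite /coefb; case: (bj); case: (bk) => /=; ring.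
have H3 : forall i,
  (xl i <= p.1 i + (dirv j k bj bk ej ek).1 i <= xu i) /\
  (xl i <= p.1 i - (dirv j k bj bk ej ek).1 i <= xu i) /\
  (yl i <= p.2 i + (dirv j k bj bk ej ek).2 i <= yu i) /\
  (yl i <= p.2 i - (dirv j k bj bk ej ek).2 i <= yu i).
  move=> l; have [hx hy] := hB l; rewrite /dirv /=.
  case: (eqVneq l j) => [hl|hlj]; first subst l.
    move: hj; rewrite /marg; case: (bj) => hj.
      by have [h1 h2] := @boxd _ _ _ _ hx hj; rewrite addr0 subr0; do !split.
    by have [h1 h2] := @boxd _ _ _ _ hy hj; rewrite addr0 subr0; do !split.
  case: (eqVneq l k) => [hl|hlk]; first subst l.
    move: hk; rewrite /marg; case: (bk) => hk.
      by have [h1 h2] := @boxd _ _ _ _ hx hk; rewrite addr0 subr0; do !split.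
    by have [h1 h2] := @boxd _ _ _ _ hy hk; rewrite addr0 subr0; do !split.
  by rewrite !addr0 !subr0; do !split.
have h := @key p _ hext H1 H2 H3.
have [h1 h2] := h j; have [h3 h4] := h k.
move: h1 h2 h3 h4; rewrite /dirv /= eqxx (negbTE hkj) eqxx.
by case: (bj); case: (bk).
Qed.

Lemma choose (cj ck mj mk : R) : 0 < mj -> 0 < mk ->
  exists ej ek, `|ej| <= mj /\ `|ek| <= mk /\ cj * ej + ck * ek = 0 /\
     (ej != 0 \/ ek != 0).
Proof.
move=> hmj hmk.
case: (eqVneq cj 0) => [->|cj0].
  exists mj, 0; rewrite normr0 gtr0_norm // mul0r mulr0 addr0.
  by split => //; split; [exact: ltW|split => //; left; rewrite gt_eqF].
case: (eqVneq ck 0) => [->|ck0].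
  exists 0, mk; rewrite normr0 gtr0_norm // mul0r mulr0 addr0.
  by split; [exact: ltW|split => //; split => //; right; rewrite gt_eqF].
have hcj : 0 < `|cj| by rewrite normr_gt0.
have hck : 0 < `|ck| by rewrite normr_gt0.
pose s := Num.min (mj / `|ck|) (mk / `|cj|).
have hs : 0 < s by rewrite lt_min !divr_gt0.
exists (s * ck), (- (s * cj)); rewrite normrN !normrM (gtr0_norm hs).
split.
  have : s <= mj / `|ck| by rewrite ge_min lexx.
  by rewrite -(ler_pM2r hck) divfK // gt_eqF.
split.
  have : s <= mk / `|cj| by rewrite ge_min lexx orbT.
  by rewrite -(ler_pM2r hcj) divfK // gt_eqF.
split; first ring.
by left; rewrite mulf_neq0 // gt_eqF.
Qed.


Definition atv (p : pt R N) (i : 'I_N) : bool :=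
  ((p.1 i == xl i) || (p.1 i == xu i)) && ((p.2 i == yl i) || (p.2 i == yu i)).

Lemma atvP p i : at_vertex xl xu yl yu p i <-> atv p i.
Proof.
rewrite /at_vertex /atv; split.
  by case=> [[->|->] [->|->]]; rewrite !eqxx ?orbT.
by move=> /andP[/orP[/eqP->|/eqP->] /orP[/eqP->|/eqP->]]; split; by [left|right].
Qed.

Lemma interior p i : xl i <= p.1 i <= xu i -> yl i <= p.2 i <= yu i ->
  ~~ atv p i -> exists b, 0 < marg p i b.
Proof.
move=> /andP[hx1 hx2] /andP[hy1 hy2]; rewrite /atv negb_and !negb_or.
case/orP=> /andP[h1 h2].
  exists true; rewrite /marg lt_min !subr_gt0 !lt_def hx1 hx2 !andbT.
  by rewrite h1 eq_sym h2.
exists false; rewrite /marg lt_min !subr_gt0 !lt_def hy1 hy2 !andbT.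
by rewrite h1 eq_sym h2.
Qed.

End Aux.


Theorem corollary2 (R : realFieldType) (N : nat) (hN : (0 < N)%N)
  (a xl xu yl yu : 'I_N -> R)
  (ha : forall i, a i != 0)
  (hx : forall i, xl i < xu i) (hy : forall i, yl i < yu i)
  (p : pt R N) :
  extreme_point (Sa a xl xu yl yu) p ->
  D0 a xl xu yl yu p \/ exists k : 'I_N, Dk a xl xu yl yu k p.
Proof.
move=> hext; have [[hS hB] _] := hext.
have two : forall j k, j != k -> ~~ atv xl xu yl yu p j -> ~~ atv xl xu yl yu p k -> False.
  move=> j k hjk nj nk.
  have [hxj hyj] := hB j; have [hxk hyk] := hB k.
  have [bj hmj] := @interior _ _ _ _ _ _ _ _ hxj hyj nj.
  have [bk hmk] := @interior _ _ _ _ _ _ _ _ hxk hyk nk.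
  have [ej [ek [h1 [h2 [h3 h4]]]]] :=
    @choose _ (coefb a p j bj) (coefb a p k bk) _ _ hmj hmk.
  have [e1 e2] := no_two hext j k hjk _ _ _ _ h1 h2 h3.
  by case: h4; rewrite ?e1 ?e2 eqxx.
case: (pickP (fun i => ~~ atv xl xu yl yu p i)) => [k hk|hnone].
  right; exists k; split; first done; split.
    move=> i hik; apply/atvP; apply/negPn/negP => hi; exact: (two i k hik hi hk).
  move: hS; rewrite (bigD1 k) //= => hS.
  have hr : \sum_(i < N | i != k) a i * p.1 i * p.2 i = - (a k * p.1 k * p.2 k).
    by apply/eqP; rewrite -addr_eq0 addrC hS.
  rewrite hr; field; exact: ha k.
left; split; first done.
by move=> i; apply/atvP; move: (hnone i) => /= /negbFE.
Qed.
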